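(* Let $L,M\geq 1$, let $\{u\}_L=\{u_1,\ldots,u_L\}$ and $\{w\}_M=\{w_1,\ldots,w_M\}$ be complex variables, and write $\bar u_l=u_l+\gamma$, $\{\bar u\}_L=\{\bar u_1,\ldots,\bar u_L\}$. To each $u_l$ associate an auxiliary space $V_{a_l}\cong\mathbb{C}^2$ and to each $w_m$ a quantum space $V_m\cong\mathbb{C}^2$. Define $$T\big(\{u\}_L,\{w\}_M\big)=T_{a_L}(u_L,\{w\}_M)\cdots T_{a_1}(u_1,\{w\}_M),$$ an operator on $V_{a_1}\otimes\cdots\otimes V_{a_L}\otimes V_1\otimes\cdots\otimes V_M$. For each $1\le m\le M$ let $T_m(w_m,\{\bar u\}_L)=R_{m a_1}(w_m,\bar u_1)\cdots R_{m a_L}(w_m,\bar u_L)$, regarded as a $2\times 2$ matrix in $V_m$ with entries $A(w_m,\{\bar u\}_L),B(w_m,\{\bar u\}_L),C(w_m,\{\bar u\}_L),D(w_m,\{\bar u\}_L)$ acting on $V_{a_1}\otimes\cdots\otimes V_{a_L}$, and set $$\overline{T}_m(w_m,\{\bar u\}_L)=\begin{pmatrix} D(w_m,\{\bar u\}_L) & -B(w_m,\{\bar u\}_L)\\ -C(w_m,\{\bar u\}_L) & A(w_m,\{\bar u\}_L)\end{pmatrix}_m .$$ Then $$T\big(\{u\}_L,\{w\}_M\big)=(-1)^{LM}\,\overline{T}_1(w_1,\{\bar u\}_L)\cdots \overline{T}_M(w_M,\{\bar u\}_L).$$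
   Context: Notation: $[x]=\sinh x$, and $\gamma$ is a fixed complex parameter. Each space $V_a\cong\mathbb{C}^2$ has basis $\uparrow=(1,0)^{T}$, $\downarrow=(0,1)^{T}$. For two such spaces $V_a,V_b$, the $R$-matrix $R_{ab}(u,v)\in\mathrm{End}(V_a\otimes V_b)$ is, in the ordered basis $(\uparrow\otimes\uparrow,\uparrow\otimes\downarrow,\downarrow\otimes\uparrow,\downarrow\otimes\downarrow)$ (first factor $V_a$), $$R_{ab}(u,v)=\begin{pmatrix}[u-v+\gamma]&0&0&0\\0&[u-v]&[\gamma]&0\\0&[\gamma]&[u-v]&0\\0&0&0&[u-v+\gamma]\end{pmatrix},$$ acting as the identity on all other tensor factors. For an auxiliary space $V_a$ and quantum spaces $V_1,\dots,V_M$, the monodromy matrix is $T_a(u,\{w\}_M)=R_{a1}(u,w_1)\cdots R_{aM}(u,w_M)$; writing it as a $2\times2$ matrix in $V_a$ (rows/columns indexed by $\uparrow,\downarrow$), $T_a(u,\{w\}_M)=\begin{pmatrix}A(u,\{w\}_M)&B(u,\{w\}_M)\\C(u,\{w\}_M)&D(u,\{w\}_M)\end{pmatrix}_a$ with entries acting on $V_1\otimes\cdots\otimes V_M$. The same convention defines $A,B,C,D$ for a monodromy matrix whose auxiliary space is a quantum space $V_m$ and whose ''sites'' are the spaces $V_{a_1},\dots,V_{a_L}$. *)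

(* Defs.v *)
From mathcomp Require Import all_boot all_algebra.
From mathcomp Require Import complex.
From mathcomp Require Import Rstruct.
From Stdlib Require Import Reals.

Set Implicit Arguments.
Unset Strict Implicit.
Unset Printing Implicit Defensive.

Import GRing.Theory.
Local Open Scope ring_scope.

Definition Cplx : Type := complex R.

Definition csinh (z : Cplx) : Cplx :=
  Complex (Rmult (sinh (Re z)) (cos (Im z))) (Rmult (cosh (Re z)) (sin (Im z))).

(* Basis of Cplx^2 : up = (1,0)^T (index 0), down = (0,1)^T (index 1). *)
Definition up : 'I_2 := ord0.
Definition down : 'I_2 := ord_max.

(* A basis state of the tensor product  (x)_{k in S} V_k,  V_k = Cplx^2. *)
Definition state (S : finType) := {ffun S -> 'I_2}.

(* Operators on (x)_{k in S} V_k, given by their matrix entries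
   <s| O |t> in the product basis. *)
Definition Op (S : finType) := state S -> state S -> Cplx.

Definition opmul (S : finType) (O1 O2 : Op S) : Op S :=
  fun s t => \sum_(r : state S) O1 s r * O2 r t.

Definition opone (S : finType) : Op S :=
  fun s t => if s == t then 1 else 0.

Definition opscale (S : finType) (c : Cplx) (O : Op S) : Op S :=
  fun s t => c * O s t.

Definition opopp (S : finType) (O : Op S) : Op S := fun s t => - O s t.

Definition opprod (S : finType) (l : seq (Op S)) : Op S :=
  foldr (@opmul S) (@opone S) l.

(* The 4x4 R-matrix R_{ab}(u,v) on V_a (x) V_b, entry in row (i1,i2),
   column (j1,j2) (first factor V_a), in the ordered basis
   (up up, up down, down up, down down). *)
Definition Rent (gamma u v : Cplx) (i1 i2 j1 j2 : 'I_2) : Cplx :=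
  if (i1 == j1) && (i2 == j2) then
    (if i1 == i2 then csinh (u - v + gamma) else csinh (u - v))
  else if [&& i1 == j2, i2 == j1 & i1 != i2] then csinh gamma
  else 0.

(* R_{ab}(u,v) acting on the sites a, b and as the identity on all others. *)
Definition Rop (S : finType) (gamma : Cplx) (a b : S) (u v : Cplx) : Op S :=
  fun s t =>
    Rent gamma u v (s a) (s b) (t a) (t b) *
    (if [forall k, ((k != a) && (k != b)) ==> (s k == t k)] then 1 else 0).

Definition upd (S : finType) (s : state S) (m : S) (i : 'I_2) : state S :=
  [ffun k => if k == m then i else s k].

(* For an operator O, viewed as a 2x2 matrix in the space V_m, its (i,j)
   entry (an operator on the remaining factors; it does not depend on the
   site-m components of its arguments). *)
Definition entry (S : finType) (O : Op S) (m : S) (i j : 'I_2) : Op S :=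
  fun s t => O (upd s m i) (upd t m j).

(* The operator whose 2x2 block matrix in V_m is X (X i j acting on the
   remaining factors). *)
Definition mx_in (S : finType) (m : S) (X : 'I_2 -> 'I_2 -> Op S) : Op S :=
  fun s t => X (s m) (t m) s t.

Definition Tbar (S : finType) (O : Op S) (m : S) : Op S :=
  let A := entry O m up up in
  let B := entry O m up down in
  let Cc := entry O m down up in
  let D := entry O m down down in
  mx_in m (fun i j =>
    if i == up then (if j == up then D else opopp B)
    else (if j == up then opopp Cc else A)).

(* Sites: the auxiliary spaces a_1..a_L are (inl l), the quantum spaces
   1..M are (inr m). *)
Definition site (L M : nat) : finType := ('I_L + 'I_M)%type.

Definition Taux (L M : nat) (gamma : Cplx) (u : 'I_L -> Cplx) (w : 'I_M -> Cplx)
  (l : 'I_L) : Op (site L M) :=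
  opprod [seq Rop gamma (inl l : site L M) (inr m) (u l) (w m) | m <- enum 'I_M].

Definition Tfull (L M : nat) (gamma : Cplx) (u : 'I_L -> Cplx) (w : 'I_M -> Cplx)
  : Op (site L M) :=
  opprod [seq Taux gamma u w l | l <- rev (enum 'I_L)].

Definition Tquant (L M : nat) (gamma : Cplx) (u : 'I_L -> Cplx) (w : 'I_M -> Cplx)
  (m : 'I_M) : Op (site L M) :=
  opprod [seq Rop gamma (inr m : site L M) (inl l) (w m) (u l + gamma)
         | l <- enum 'I_L].

(* Main.v *)
Require Import Defs.
From mathcomp Require Import all_boot all_algebra.
From mathcomp Require Import complex.
From mathcomp Require Import Rstruct.
From Stdlib Require Import Reals.
Lemma sinh_neg' x : sinh (Ropp x) = Ropp (sinh x).
Proof. unfold sinh; rewrite Ropp_involutive; field. Qed.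
Lemma cosh_neg' x : cosh (Ropp x) = cosh x.
Proof. unfold cosh; rewrite Ropp_involutive; field. Qed.
From mathcomp Require Import ring.
Import GRing.Theory.
Local Open Scope ring_scope.
Lemma csinh_opp z : csinh (- z) = - csinh z.
Proof.
case: z => a b. rewrite /csinh /=.
rewrite -[X in sinh X]/(Ropp a) -[X in cosh X]/(Ropp a) -[X in sin X]/(Ropp b) -[X in cos X]/(Ropp b).
rewrite sinh_neg' cos_neg cosh_neg' sin_neg.
apply/eqP; rewrite eq_complex /=; apply/andP; split; apply/eqP; rewrite -RoppE. by rewrite Ropp_mult_distr_l. by rewrite Ropp_mult_distr_r.
Qed.
From Stdlib Require Import FunctionalExtensionality.
Lemma tring (x y g : Cplx) : x - (y + g) + g = -(y - x).
Proof. ring. Qed.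

Section OpAlg.
Variable S : finType.
Implicit Types O X Y Z : Op S.

Lemma opext X Y : (forall s t, X s t = Y s t) -> X = Y.
Proof. move=> H; apply: functional_extensionality => s; apply: functional_extensionality => t; exact: H. Qed.

Lemma opmulA X Y Z : @opmul S X (@opmul S Y Z) = @opmul S (@opmul S X Y) Z.
Proof.
apply: opext => s t; rewrite /opmul.
under eq_bigr => q _ do rewrite big_distrr.
rewrite exchange_big /=; apply: eq_bigr => r _; rewrite big_distrl /=.
by apply: eq_bigr => q _; rewrite mulrA.
Qed.

Lemma opmul1 X : @opmul S X (@opone S) = X.
Proof.
apply: opext => s t; rewrite /opmul /opone.
rewrite (bigD1 t) //= eqxx mulr1 big1 ?addr0 // => r /negbTE ->; by rewrite mulr0.
Qed.

Lemma op1mul X : @opmul S (@opone S) X = X.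
Proof.
apply: opext => s t; rewrite /opmul /opone.
rewrite (bigD1 s) //= eqxx mul1r big1 ?addr0 // => r; rewrite eq_sym => /negbTE ->; by rewrite mul0r.
Qed.

Lemma opmulZl c X Y : @opmul S (@opscale S c X) Y = @opscale S c (@opmul S X Y).
Proof. apply: opext => s t; rewrite /opmul /opscale big_distrr; apply: eq_bigr => r _; by rewrite -mulrA. Qed.

Lemma opmulZr c X Y : @opmul S X (@opscale S c Y) = @opscale S c (@opmul S X Y).
Proof. apply: opext => s t; rewrite /opmul /opscale big_distrr; apply: eq_bigr => r _; by rewrite mulrCA. Qed.

Lemma opscaleM c d X : @opscale S c (@opscale S d X) = @opscale S (c * d) X.
Proof. apply: opext => s t; by rewrite /opscale mulrA. Qed.

Lemma opscale1 X : @opscale S 1 X = X.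
Proof. apply: opext => s t; by rewrite /opscale mul1r. Qed.

Lemma opprod_cat l1 l2 : @opprod S (l1 ++ l2) = @opmul S (@opprod S l1) (@opprod S l2).
Proof. elim: l1 => [|x l IH] /=; first by rewrite op1mul. by rewrite IH opmulA. Qed.

Lemma opprod_scale (I : Type) c (G : I -> Op S) (xs : seq I) :
  @opprod S [seq @opscale S c (G x) | x <- xs] = @opscale S (c ^+ size xs) (@opprod S [seq G x | x <- xs]).
Proof.
elim: xs => [|x xs IH] /=; first by rewrite expr0 opscale1.
by rewrite IH opmulZr opmulZl opscaleM exprS mulrC.
Qed.

Lemma comm_prod (I : eqType) (G : I -> Op S) (l : seq I) Y : (forall x, x \in l -> @opmul S (G x) Y = @opmul S Y (G x)) ->
  @opmul S (@opprod S [seq G i | i <- l]) Y = @opmul S Y (@opprod S [seq G i | i <- l]).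
Proof.
elim: l => [|x l IH] H /=; first by rewrite op1mul opmul1.
rewrite -opmulA IH; last by move=> z zl; apply: H; rewrite inE zl orbT.
by rewrite !opmulA H // inE eqxx.
Qed.

Lemma zip_prod (I : eqType) (A B : I -> Op S) (ms : seq I) : uniq ms ->
  (forall m m', m \in ms -> m' \in ms -> m != m' -> @opmul S (A m') (B m) = @opmul S (B m) (A m')) ->
  @opmul S (@opprod S [seq A m | m <- ms]) (@opprod S [seq B m | m <- ms]) = @opprod S [seq @opmul S (A m) (B m) | m <- ms].
Proof.
elim: ms => [|m0 ms IH] /= U H; first by rewrite opmul1.
case/andP: U => m0n U.
rewrite -!opmulA; congr opmul.
rewrite opmulA comm_prod; last first.
  move=> m' m'in; apply: H; rewrite ?inE ?eqxx ?m'in ?orbT //.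
  by apply/eqP => E; move: m0n; rewrite E m'in.
rewrite -opmulA IH // => m m' mi m'i; apply: H; by rewrite inE ?mi ?m'i orbT.
Qed.

Lemma grid (I J : eqType) (F : I -> J -> Op S) (ls : seq I) (ms : seq J) : uniq ls -> uniq ms ->
  (forall l l' m m', l != l' -> m != m' -> @opmul S (F l m) (F l' m') = @opmul S (F l' m') (F l m)) ->
  @opprod S [seq @opprod S [seq F l m | m <- ms] | l <- ls] = @opprod S [seq @opprod S [seq F l m | l <- ls] | m <- ms].
Proof.
move=> + Um H; elim: ls => [|l0 ls IH] /= Ul.
  elim: ms Um {H} => [|m ms IH] //= /andP[_ U]; by rewrite -IH // op1mul.
case/andP: Ul => l0n Ul.
rewrite IH // zip_prod //.
move=> m m' _ _ mm'; symmetry; rewrite comm_prod // => l li.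
apply: H => //; by apply/eqP => E; move: l0n; rewrite -E li.
Qed.
End OpAlg.

Local Notation up := Defs.up.
Definition flip (i : 'I_2) : 'I_2 := if i == up then down else up.
Definition eps (i j : 'I_2) : Cplx := if i == j then 1 else -1.

Lemma I2_cases (i : 'I_2) : i = up \/ i = down.
Proof.
case: i => [[|[|n]] H]; [left|right|by []]; by apply: val_inj.
Qed.

Lemma up_down : (up == down) = false. Proof. by []. Qed.
Lemma down_up : (down == up) = false. Proof. by []. Qed.
Lemma flip_up : flip up = down. Proof. by []. Qed.
Lemma flip_down : flip down = up. Proof. by []. Qed.

Lemma sumI2 (f : 'I_2 -> Cplx) : \sum_(i : 'I_2) f i = f up + f down.
Proof.
rewrite big_ord_recl big_ord1; congr (_ + f _); by apply: val_inj.
Qed.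

Section Sites.
Variable S : finType.
Implicit Types (s t r : state S) (a b c d m : S).

Lemma updE s m i k : upd s m i k = if k == m then i else s k.
Proof. by rewrite /upd ffunE. Qed.

Lemma upd2_a s a b i j : a != b -> upd (upd s a i) b j a = i.
Proof. by move=> ab; rewrite !updE (negbTE ab) eqxx. Qed.
Lemma upd2_b s a b i j : upd (upd s a i) b j b = j.
Proof. by rewrite !updE eqxx. Qed.

Lemma sum_off2 a b s (F : state S -> Cplx) : a != b ->
  \sum_(r : state S) (if [forall k, ((k != a) && (k != b)) ==> (s k == r k)] then F r else 0) =
  \sum_(i : 'I_2) \sum_(j : 'I_2) F (upd (upd s a i) b j).
Proof.
move=> ab; rewrite -big_mkcond /=.
rewrite (reindex_onto (fun p : 'I_2 * 'I_2 => upd (upd s a p.1) b p.2) (fun r : state S => (r a, r b))); last first.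
  move=> r /forallP H; apply/ffunP => k; rewrite !updE /=.
  case: (eqVneq k b) => [->//|kb]; case: (eqVneq k a) => [->//|ka].
  by move: (H k); rewrite ka kb /= => /eqP.
rewrite pair_big /=; apply: eq_bigl => -[i j] /=.
rewrite upd2_a // upd2_b eqxx andbT; apply/forallP => k; apply/implyP => /andP[ka kb].
by rewrite !updE (negbTE ka) (negbTE kb).
Qed.

Lemma left_Rop g a b x y Z s t : a != b ->
  opmul (Rop g a b x y) Z s t =
  \sum_(i : 'I_2) \sum_(j : 'I_2) Rent g x y (s a) (s b) i j * Z (upd (upd s a i) b j) t.
Proof.
move=> ab; rewrite /opmul /Rop.
transitivity (\sum_(r : state S) (if [forall k, ((k != a) && (k != b)) ==> (s k == r k)]
   then Rent g x y (s a) (s b) (r a) (r b) * Z r t else 0)).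
  apply: eq_bigr => r _; case: ifP => _; by rewrite ?mulr1 ?mulr0 ?mul0r.
rewrite sum_off2 //.
apply: eq_bigr => i _; apply: eq_bigr => j _; by rewrite upd2_a // upd2_b.
Qed.

Lemma right_Rop g a b x y Z s t : a != b ->
  opmul Z (Rop g a b x y) s t =
  \sum_(i : 'I_2) \sum_(j : 'I_2) Z s (upd (upd t a i) b j) * Rent g x y i j (t a) (t b).
Proof.
move=> ab; rewrite /opmul /Rop.
transitivity (\sum_(r : state S) (if [forall k, ((k != a) && (k != b)) ==> (t k == r k)]
   then Z s r * Rent g x y (r a) (r b) (t a) (t b) else 0)).
  apply: eq_bigr => r _.
  have -> : [forall k, (k != a) && (k != b) ==> (r k == t k)] = [forall k, (k != a) && (k != b) ==> (t k == r k)].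
    by apply: eq_forallb => k; rewrite [r k == _]eq_sym.
  case: ifP => _; by rewrite ?mulr1 ?mulr0 ?mul0r.
rewrite sum_off2 //.
apply: eq_bigr => i _; apply: eq_bigr => j _; by rewrite upd2_a // upd2_b.
Qed.

Lemma upd_upd s m i j : upd (upd s m i) m j = upd s m j.
Proof. apply/ffunP => k; rewrite !updE; by case: eqP. Qed.

Lemma upd_comm s a b i j : a != b -> upd (upd s a i) b j = upd (upd s b j) a i.
Proof.
move=> ab; apply/ffunP => k; rewrite !updE.
case: (eqVneq k b) => [->|//]; by rewrite eq_sym (negbTE ab).
Qed.

Lemma upd_other s m i k : k != m -> upd s m i k = s k.
Proof. by move=> km; rewrite updE (negbTE km). Qed.

Lemma upd_same s m i : upd s m i m = i.
Proof. by rewrite updE eqxx. Qed.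

Lemma upd_id s m : upd s m (s m) = s.
Proof. apply/ffunP => k; rewrite updE; by case: eqP => [->|]. Qed.

Lemma upd_eq_same s t m z : s m = t m -> (upd s m z == upd t m z) = (s == t).
Proof.
move=> E; apply/eqP/eqP => [H|->//]; apply/ffunP => k.
case: (eqVneq k m) => [->//|km]; by rewrite -(upd_other s m z k km) H upd_other.
Qed.

Lemma flip_neq i j : i != j -> flip j = i.
Proof.
by case: (I2_cases i) => ->; case: (I2_cases j) => ->; rewrite ?eqxx.
Qed.

Lemma TbarE O m s t : Tbar O m s t = eps (s m) (t m) * O (upd s m (flip (t m))) (upd t m (flip (s m))).
Proof.
rewrite /Tbar /mx_in /entry /opopp /eps /flip.
by case: (I2_cases (s m)) => ->; case: (I2_cases (t m)) => ->; rewrite ?eqxx ?up_down ?down_up ?mul1r ?mulN1r.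
Qed.

Lemma Tbar_one m : Tbar (@opone S) m = @opone S.
Proof.
apply: opext => s t; rewrite TbarE /opone /eps.
case: (eqVneq (s m) (t m)) => [E|ne].
  by rewrite E upd_eq_same // mul1r.
rewrite (flip_neq _ _ ne) (flip_neq (t m) (s m)) 1?eq_sym // !upd_id.
case: (eqVneq s t) => [st|]; last by rewrite mulr0.
by rewrite st eqxx in ne.
Qed.

Definition idsite a (Y : Op S) := forall s t, Y s t = if s a == t a then Y (upd s a up) (upd t a up) else 0.

Lemma idsite_one a : idsite a (@opone S).
Proof.
move=> s t; rewrite /opone; case: (eqVneq (s a) (t a)) => [E|ne]; first by rewrite upd_eq_same.
case: (eqVneq s t) => // st; by rewrite st eqxx in ne.
Qed.

Lemma idsite_Rop a b c g x y Y : b != c -> a != b -> a != c -> idsite a Y ->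
  idsite a (opmul (Rop g b c x y) Y).
move=> bc ab ac hY s t; rewrite !left_Rop //.
have ba : b != a by rewrite eq_sym. have ca : c != a by rewrite eq_sym.
rewrite !upd_other //.
case: ifP => E.
  apply: eq_bigr => i _; apply: eq_bigr => j _; rewrite hY !upd_other // E.
  by rewrite (upd_comm _ _ a) // (upd_comm _ b a).
rewrite big1 // => i _; rewrite big1 // => j _; by rewrite hY !upd_other // E mulr0.
Qed.

Lemma sum_if (f : 'I_2 -> Cplx) j0 W : \sum_(j : 'I_2) f j * (if j == j0 then W else 0) = f j0 * W.
Proof.
rewrite (bigD1 j0) //= eqxx big1 ?addr0 // => j /negbTE ->; by rewrite mulr0.
Qed.

Lemma Tbar_step g m a x y Y : m != a -> idsite a Y ->
  Tbar (opmul (Rop g m a x (y + g)) Y) m = opmul (Tbar Y m) (opscale (-1) (Rop g a m y x)).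
Proof.
move=> ma hY; have am : a != m by rewrite eq_sym.
apply: opext => s t; rewrite TbarE left_Rop // opmulZr /opscale right_Rop //.
rewrite upd_same upd_other //.
under eq_bigr => i _ do under eq_bigr => j _ do
  rewrite upd_upd hY upd_same upd_other // upd_upd (upd_comm _ m a) // (upd_comm t m a) //.
under [in RHS]eq_bigr => i _ do under eq_bigr => j _ do
  rewrite TbarE upd_same upd_upd hY upd_other // upd_other // upd_same (upd_comm _ m a) //
    (upd_comm _ m a) // upd_upd.
rewrite !sumI2 flip_up flip_down.
have cs1 : csinh (x - (y + g) + g) = - csinh (y - x) by rewrite -csinh_opp; congr csinh; ring.
have cs2 : csinh (x - (y + g)) = - csinh (y - x + g) by rewrite -csinh_opp; congr csinh; ring.
case: (I2_cases (s m)) => ->; case: (I2_cases (t m)) => ->;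
case: (I2_cases (s a)) => ->; case: (I2_cases (t a)) => ->;
rewrite /eps /Rent /flip ?eqxx ?up_down ?down_up /= ?cs1 ?cs2; ring.
Qed.


Definition Qoff a b c d s t := [forall k, [&& k != a, k != b, k != c & k != d] ==> (s k == t k)].

Lemma forall_upd2 s t a b c d i j : a != b -> a != c -> a != d -> b != c -> b != d ->
  [forall k, (k != c) && (k != d) ==> (upd (upd s a i) b j k == t k)] =
  [&& i == t a, j == t b & Qoff a b c d s t].
Proof.
move=> ab ac ad bc bd; apply/forallP/and3P => [H|[/eqP ia /eqP jb /forallP Q] k].
  split.
  - by move: (H a); rewrite ac ad /= upd2_a.
  - by move: (H b); rewrite bc bd /= upd2_b.
  - apply/forallP => k; apply/implyP => /and4P[ka kb kc kd].
    by move: (H k); rewrite kc kd /= !upd_other.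
apply/implyP => /andP[kc kd].
case: (eqVneq k b) => [->|kb]; first by rewrite upd2_b jb.
case: (eqVneq k a) => [->|ka]; first by rewrite upd2_a // ia.
rewrite !upd_other //; by move: (Q k); rewrite ka kb kc kd.
Qed.

Lemma sum2_pick (F : 'I_2 -> 'I_2 -> Cplx) i0 j0 :
  \sum_(i : 'I_2) \sum_(j : 'I_2) (if (i == i0) && (j == j0) then F i j else 0) = F i0 j0.
Proof.
rewrite (bigD1 i0) //= [X in _ + X]big1 ?addr0; last first.
  move=> i ii0; rewrite big1 // => j _; by rewrite (negbTE ii0).
rewrite eqxx (bigD1 j0) //= eqxx [X in _ + X]big1 ?addr0 // => j jj0; by rewrite (negbTE jj0).
Qed.

Lemma Rop_comm g a b c d x y x' y' : a != b -> c != d -> a != c -> a != d -> b != c -> b != d ->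
  opmul (Rop g a b x y) (Rop g c d x' y') = opmul (Rop g c d x' y') (Rop g a b x y).
Proof.
move=> ab cd ac ad bc bd; apply: opext => s t.
rewrite left_Rop // right_Rop //.
have ca : c != a by rewrite eq_sym. have da : d != a by rewrite eq_sym.
have cb : c != b by rewrite eq_sym. have db : d != b by rewrite eq_sym.
transitivity (Rent g x y (s a) (s b) (t a) (t b) *
   (Rent g x' y' (s c) (s d) (t c) (t d) * (if Qoff a b c d s t then 1 else 0))).
  rewrite -(sum2_pick (fun i j => Rent g x y (s a) (s b) i j *
   (Rent g x' y' (s c) (s d) (t c) (t d) * (if Qoff a b c d s t then 1 else 0))) (t a) (t b)).
  apply: eq_bigr => i _; apply: eq_bigr => j _.
  rewrite /Rop !upd_other // forall_upd2 //.
  by case: (i == t a); case: (j == t b); case: (Qoff a b c d s t); rewrite /= ?mulr0.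
rewrite [LHS]mulrC -(sum2_pick (fun i j => Rent g x' y' (s c) (s d) (t c) (t d) * (if Qoff a b c d s t then 1 else 0) *
   Rent g x y i j (t a) (t b)) (s a) (s b)).
symmetry; apply: eq_bigr => i _; apply: eq_bigr => j _.
rewrite /Rop !upd_other //.
have -> : [forall k, (k != c) && (k != d) ==> (s k == upd (upd t a i) b j k)] =
  [forall k, (k != c) && (k != d) ==> (upd (upd t a i) b j k == s k)].
  by apply: eq_forallb => k; rewrite [s k == _]eq_sym.
rewrite forall_upd2 // [i == _]eq_sym [j == _]eq_sym.
have -> : Qoff a b c d t s = Qoff a b c d s t.
  by apply: eq_forallb => k; rewrite [t k == _]eq_sym.
case: (s a == i); case: (s b == j); case: (Qoff a b c d s t); rewrite /= ?mulr0 ?mul0r //.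
Qed.
End Sites.

Lemma idsite_list L M (g : Cplx) (u : 'I_L -> Cplx) (w : 'I_M -> Cplx) (m : 'I_M) (l0 : 'I_L) (ls : seq 'I_L) :
  l0 \notin ls ->
  @idsite (site L M) (inl l0) (opprod [seq Rop g (inr m : site L M) (inl l) (w m) (u l + g) | l <- ls]).
Proof.
elim: ls => [|l ls IH] /=; first by move=> _; apply: idsite_one.
rewrite inE negb_or => /andP[l0l l0n]; apply: idsite_Rop => //; last by apply: IH.
Qed.

Lemma Tbar_list L M (g : Cplx) (u : 'I_L -> Cplx) (w : 'I_M -> Cplx) (m : 'I_M) (ls : seq 'I_L) : uniq ls ->
  Tbar (opprod [seq Rop g (inr m : site L M) (inl l) (w m) (u l + g) | l <- ls]) (inr m)
  = opscale ((-1) ^+ size ls) (opprod [seq Rop g (inl l : site L M) (inr m) (u l) (w m) | l <- rev ls]).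
Proof.
elim: ls => [|l0 ls IH] /=; first by rewrite Tbar_one expr0 opscale1.
case/andP => l0n U; rewrite Tbar_step //; last by apply: idsite_list.
by rewrite IH // rev_cons -cats1 map_cat opprod_cat /= opmul1 opmulZl opmulZr opscaleM exprS mulrC.
Qed.

Theorem lemma4 (L M : nat) (hL : leq 1 L) (hM : leq 1 M)
  (gamma : Cplx) (u : 'I_L -> Cplx) (w : 'I_M -> Cplx) :
  Tfull gamma u w =
  opscale ((-1) ^+ (L * M))
    (opprod [seq Tbar (Tquant gamma u w m) (inr m : site L M) | m <- enum 'I_M]).
Proof.
have -> : [seq Tbar (Tquant gamma u w m) (inr m : site L M) | m <- enum 'I_M] =
  [seq opscale ((-1) ^+ L) (opprod [seq Rop gamma (inl l : site L M) (inr m) (u l) (w m) | l <- rev (enum 'I_L)]) | m <- enum 'I_M].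
  apply: eq_map => m; by rewrite /Tquant Tbar_list ?enum_uniq // size_enum_ord.
rewrite opprod_scale opscaleM size_enum_ord -exprM.
have -> : (-1 : Cplx) ^+ (L * M) * (-1) ^+ (L * M) = 1 by rewrite -exprMn mulrNN mulr1 expr1n.
rewrite opscale1 /Tfull /Taux.
apply: (@grid _ _ _ (fun l m => Rop gamma (inl l : site L M) (inr m) (u l) (w m))).
- by rewrite rev_uniq enum_uniq.
- by rewrite enum_uniq.
move=> l l' m m' ll' mm'; apply: Rop_comm => //.
Qed.
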